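(* There exists an absolute constant $\theta>0$ such that the following holds. Let $\epsilon \in (0,\exp(-2))$, let $G$ be an abelian group, and let $A \subset G$ be a non-empty finite distributional $\epsilon$-approximate group. If $240\,\epsilon \log(\epsilon^{-1}|A|) \le \theta$, then there exist a finite subgroup $H$ of $G$ and an element $x \in G$ such that \[\frac{|A \,\Delta\, (H + \{x\})|}{|H|} \le 240\, \epsilon\, \log(\epsilon^{-1}|A|).\]
   Context: $\log$ denotes the natural logarithm and $\Delta$ denotes symmetric difference of sets; $H+\{x\} = \{h+x : h \in H\}$. Definition: for $\epsilon>0$, an abelian group $G$ and a non-empty finite subset $A$ of $G$, $A$ is a distributional $\epsilon$-approximate group of $G$ if there exists a subset $U \subset G$ with $|U| = |A|$ such that the proportion of pairs $(a,b) \in A \times A$ with $a+b \in U$ is at least $1-\epsilon$. *)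

(* Defs.v *)
From mathcomp Require Import all_boot all_order all_algebra.
From mathcomp Require Import finmap.
From Stdlib Require Import Reals.
Set Implicit Arguments. Unset Strict Implicit. Unset Printing Implicit Defensive.
Local Open Scope fset_scope.
Local Open Scope ring_scope.

(* Abelian groups are modelled as zmodType's (additive, possibly infinite);
   finite subsets as {fset G}. *)

Definition is_subgroup (G : zmodType) (H : {fset G}) : Prop :=
  (0 \in H) /\ (forall x y, x \in H -> y \in H -> (x - y) \in H).

Definition translate (G : zmodType) (H : {fset G}) (x : G) : {fset G} :=
  [fset (h + x) | h in H].

Definition symdiff (G : zmodType) (A B : {fset G}) : {fset G} :=
  (A `\` B) `|` (B `\` A).

Definition npairs_in (G : zmodType) (A U : {fset G}) : nat :=
  #|` [fset p in A `*` A | (p.1 + p.2) \in U] |.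

Local Open Scope R_scope.
Definition distrib_approx_group (G : zmodType) (eps : R) (A : {fset G}) : Prop :=
  A != fset0 /\
  exists U : {fset G}, #|` U| = #|` A| /\
    1 - eps <= INR (npairs_in A U) / INR (#|` A| * #|` A|).

(* Main.v *)
Require Import Defs.
From mathcomp Require Import all_boot all_order all_algebra.
From mathcomp Require Import finmap.
From Stdlib Require Import Reals Lra Psatz.
Set Implicit Arguments. Unset Strict Implicit. Unset Printing Implicit Defensive.
Local Open Scope fset_scope.
Import GRing.Theory.

Local Open Scope ring_scope.

Lemma in_tr (G : zmodType) (X : {fset G}) (x y : G) : (y \in translate X x) = (y - x \in X).
Proof.
apply/imfsetP/idP => /=.
  by case=> h hX ->; rewrite addrK.
by move=> H; exists (y - x) => //; rewrite subrK.
Qed.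

Lemma card_tr (G : zmodType) (X : {fset G}) (x : G) : #|` translate X x| = #|` X|.
Proof.
by rewrite /translate card_in_imfset //= => a b _ _; apply: addIr.
Qed.

Lemma tr_tr (G : zmodType) (X : {fset G}) (a b : G) : translate (translate X a) b = translate X (a + b).
Proof. by apply/fsetP=> y; rewrite !in_tr opprD addrA addrAC. Qed.

Lemma tr0 (G : zmodType) (X : {fset G}) : translate X 0 = X.
Proof. by apply/fsetP=> y; rewrite in_tr subr0. Qed.

Lemma card_Dtr (G : zmodType) (X Y : {fset G}) (z : G) : #|` translate X z `\` translate Y z| = #|` X `\` Y|.
Proof.
have -> : translate X z `\` translate Y z = translate (X `\` Y) z.
  by apply/fsetP=> y; rewrite !inE !in_tr !inE.
by rewrite card_tr.
Qed.

Lemma card_tri (G : zmodType) (X Y Z : {fset G}) : leq #|` X `\` Z| (addn #|` X `\` Y| #|` Y `\` Z|).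
Proof.
apply: (leq_trans (fsubset_leq_card (_ : X `\` Z `<=` (X `\` Y) `|` (Y `\` Z)))).
  apply/fsubsetP=> y; rewrite !inE; case: (y \in Y); case: (y \in Z) => //=.
  by move=> ->.
by rewrite -(cardfsUI (X `\` Y)) leq_addr.
Qed.

Lemma card_swap (G : zmodType) (X Y : {fset G}) : #|` X| = #|` Y| -> #|` X `\` Y| = #|` Y `\` X|.
Proof. by move=> e; rewrite !cardfsD e fsetIC. Qed.

Lemma card_sep (G : zmodType) (X : {fset G}) (P : pred G) : #|` [fset y in X | P y]| = count P X.
Proof.
by rewrite card_fset_sum1 -big_fset_condE sum1_count.
Qed.

Local Close Scope ring_scope.

Lemma sum_const_seq (T : Type) (s : seq T) (c : nat) : \sum_(x <- s) c = c * size s.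
Proof. by elim: s => [|a s IH]; rewrite ?big_nil ?big_cons ?IH ?muln0 ?mulnS. Qed.

Local Open Scope ring_scope.

Definition bad (G : zmodType) (A U : {fset G}) (x : G) := #|` translate A x `\` U|.

Lemma bad_count (G : zmodType) (A U : {fset G}) (x : G) : bad A U x = count (fun y => y + x \notin U) A.
Proof.
rewrite /bad -card_sep -[RHS](card_tr _ x); congr (size (enum_fset _)).
by apply/fsetP=> y; rewrite !inE !in_tr !inE subrK andbC.
Qed.

Lemma npairs_sum (G : zmodType) (A U : {fset G}) : (npairs_in A U + \sum_(x <- A) bad A U x = #|` A| * #|` A|)%N.
Proof.
rewrite /npairs_in card_fset_sum1 -big_fset_condE big_mkcond /fsetM big_imfset2 /=; last first.
  by move=> [a1 a2] [b1 b2] _ _ /= [-> ->].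
rewrite -big_split /= (eq_bigr (fun=> #|` A|)) ?sum_const_seq // => i _.
rewrite bad_count -sum1_count [in X in (_ + X)%N]big_mkcond -big_split /= -sum1_size.
by apply: eq_bigr => j _; rewrite (addrC i j); case: (j + i \in U).
Qed.
Local Close Scope ring_scope.

Definition rleb (x y : R) : bool := if Rle_dec x y then true else false.
Lemma rlebP x y : reflect (Rle x y) (rleb x y).
Proof. by rewrite /rleb; case: Rle_dec => h; constructor. Qed.

Lemma INR_add m n : INR (addn m n) = (INR m + INR n)%R.
Proof. exact: plus_INR. Qed.
Lemma INR_mul m n : INR (muln m n) = (INR m * INR n)%R.
Proof. exact: mult_INR. Qed.
Lemma INR_leq m n : (m <= n)%N -> (INR m <= INR n)%R.
Proof. by move/leP; apply: le_INR. Qed.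

Lemma markov (T : Type) (s : seq T) (f : T -> nat) (c : R) : (0 <= c)%R ->
  (INR (count (fun x => ~~ rleb (INR (f x)) c) s) * c <= INR (\sum_(x <- s) f x))%R.
Proof.
move=> c0; elim: s => [|a s IH]; first by rewrite big_nil /=; change (INR 0) with 0%R; lra.
rewrite big_cons /= INR_add INR_add.
have := pos_INR (f a); case: rlebP => h /=; change (INR 0) with 0%R; change (INR 1) with 1%R; try lra.
Qed.

Local Open Scope ring_scope.
Definition D (G : zmodType) (A : {fset G}) (t : G) := #|` A `\` translate A t|.

Lemma D_tr (G : zmodType) (A : {fset G}) a b :
  D A (b - a) = #|` translate A a `\` translate A b|.
Proof. by rewrite /D -(card_Dtr _ _ a) tr_tr subrK. Qed.

Lemma D_bad (G : zmodType) (A U : {fset G}) a b : #|` U| = #|` A| ->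
  leq #|` translate A a `\` translate A b| (bad A U a + bad A U b).
Proof.
move=> hU; apply: leq_trans (card_tri _ U _) _.
by rewrite /bad (@card_swap _ U) // card_tr.
Qed.

Lemma D_sub (G : zmodType) (A : {fset G}) t s :
  leq (D A (t - s)) (D A t + D A s).
Proof.
rewrite D_tr; apply: leq_trans (card_tri _ A _) _.
by rewrite (@card_swap _ (translate A s)) ?card_tr // addnC.
Qed.

Lemma D_opp (G : zmodType) (A : {fset G}) t : D A (- t) = D A t.
Proof.
by rewrite -sub0r D_tr tr0 card_swap ?card_tr // -[X in #|` X `\` _|]tr0 -D_tr subr0.
Qed.

Local Close Scope ring_scope.

Lemma sum_lower (T : eqType) (s : seq T) (f : T -> nat) (r : R) :
  (forall x, x \in s -> (r <= INR (f x))%R) ->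
  (INR (size s) * r <= INR (\sum_(x <- s) f x))%R.
Proof.
elim: s => [|a s IH] h; first by rewrite big_nil /=; change (INR 0) with 0%R; lra.
rewrite big_cons INR_add (_ : size (a :: s) = (size s).+1) // S_INR.
have := h a (mem_head _ _); have := IH (fun x hx => h x (ltac:(by rewrite inE hx orbT))).
change (INR 1) with 1%R; lra.
Qed.

Lemma sum_upper (T : eqType) (s : seq T) (f : T -> nat) (m : nat) :
  (forall x, x \in s -> leq (f x) m) -> leq (\sum_(x <- s) f x) (size s * m).
Proof.
move=> h; rewrite mulnC -sum_const_seq big_seq [X in leq _ X]big_seq.
by apply: leq_sum => i /h.
Qed.

Lemma count_sum (T : Type) (s : seq T) (P : pred T) : count P s = \sum_(x <- s) (P x : nat).
Proof. by rewrite -sum1_count big_mkcond; apply: eq_bigr => i _; case: (P i). Qed.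
Local Open Scope ring_scope.

Definition pl (G : zmodType) (x y : G) : G := x + y.

Lemma core (G : zmodType) (A U : {fset G}) (e : R) :
  (0 < #|`A|)%nat -> #|`U| = #|`A| -> (0 < e)%R -> (e <= 1/480)%R ->
  (INR (\sum_(x <- A) bad A U x) <= e * INR #|`A| * INR #|`A|)%R ->
  exists (H : {fset G}) (x : G), is_subgroup H /\
    (INR #|` symdiff A (translate H x)| <= 480 * e * INR #|` H|)%R /\ (0 < #|` H|)%nat.
Proof.
move=> Apos hU e0 e1 hsum.
set N := #|`A|; set n := INR N.
have n1 : (1 <= n)%R by apply: (le_INR 1); apply/leP.
have hsum' : (INR (\sum_(x <- A) bad A U x) <= e * n * n)%R by exact: hsum.
clear hsum; rename hsum' into hsum.
set Gd := [fset x in A | rleb (INR (bad A U x)) (4*e*n)].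
have hGd : (INR #|` A `\` Gd| <= n/4)%R.
  have -> : A `\` Gd = [fset x in A | ~~ rleb (INR (bad A U x)) (4*e*n)].
    by apply/fsetP=> z; rewrite !inE andbC; case: (z \in A); rewrite ?andbF.
  rewrite card_sep.
  have c0 : (0 <= 4*e*n)%R by nra.
  have := markov A (bad A U) c0; set c := INR (count _ _) => hm.
  have en : (0 < e * n)%R by nra.
  apply: (Rmult_le_reg_r (4*e*n)); first by nra.
  nra.
have hDI : forall t, (#|` A `&` translate A t| + D A t)%nat = N.
  by move=> t; rewrite /D cardfsID.
have gap : forall t, (INR (D A t) < n/2)%R -> (INR (D A t) <= 8*e*n)%R.
  move=> t hD.
  set W := A `&` translate A t `&` Gd `&` translate Gd t.
  have [W0|/fset0Pn [z]] := eqVneq W fset0.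
    have sub : A `&` translate A t `<=` (A `\` Gd) `|` (translate A t `\` translate Gd t).
      apply/fsubsetP=> z; rewrite !(in_fsetI, in_fsetU, in_fsetD) => /andP[z1 z2].
      case g1: (z \in Gd); case g2: (z \in translate Gd t); rewrite ?z1 ?z2 ?orbT //=.
      have : z \in W by rewrite /W !in_fsetI z1 z2 g1 g2.
      by rewrite W0 inE.
    have := fsubset_leq_card sub; rewrite cardfsU card_Dtr => hle.
    have hle2 : leq #|` A `&` translate A t| (#|` A `\` Gd| + #|` A `\` Gd|).
      exact: leq_trans hle (leq_subr _ _).
    move: hle2 => /INR_leq; rewrite INR_add.
    have := hDI t; move/(f_equal INR); rewrite INR_add -/n => hh.
    lra.
  rewrite !inE => /andP[/andP[/andP[z1 z2] z3] z4].
  rewrite in_tr in z4.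
  have -> : t = z - (z - t) by rewrite subKr.
  rewrite D_tr.
  have := D_bad (z - t) z hU; move/INR_leq; rewrite INR_add.
  move: z3 z4; rewrite !inE => /andP[_ /rlebP h1] /andP[_ /rlebP h2].
  lra.
have e8 : (8*e*n < n/2)%R by nra.
have e16 : (16*e*n < n/2)%R by nra.
have e4 : (4*e*n < n/4)%R by nra.
set diffs := [fset p.1 - p.2 | p in A `*` A].
have in_diffs : forall t, (INR (D A t) < n)%R -> t \in diffs.
  move=> t hD.
  have : (0 < #|` A `&` translate A t|)%nat.
    rewrite lt0n; apply/negP => /eqP h0.
    have := hDI t; rewrite h0 add0n => hh.
    by move: hD; rewrite hh /n; lra.
  rewrite cardfs_gt0 => /fset0Pn [z]; rewrite in_fsetI in_tr => /andP[z1 z2].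
  apply/imfsetP; exists (z, z - t) => /=; first by rewrite in_fsetM /= z1 z2.
  by rewrite subKr.
set H := [fset t in diffs | rleb (INR (D A t)) (8*e*n)].
have memH : forall t, t \in H = rleb (INR (D A t)) (8*e*n).
  move=> t; rewrite !inE; case: rlebP => h; rewrite ?andbF ?andbT //.
  by apply: in_diffs; lra.
have H0 : 0 \in H.
  rewrite memH; apply/rlebP; rewrite /D tr0 fsetDv cardfs0 /=; change (INR 0) with 0%R; nra.
have HB : forall t s, t \in H -> s \in H -> t - s \in H.
  move=> t s; rewrite !memH => /rlebP ht /rlebP hs; apply/rlebP; apply: gap.
  have := INR_leq (D_sub A t s); rewrite INR_add; move: (INR (D A (t - s))) => x hx; lra.
have HN : forall s, s \in H -> - s \in H.
  by move=> s hs; rewrite -sub0r HB.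
have HD : forall t s, t \in H -> s \in H -> t + s \in H.
  by move=> t s ht hs; rewrite -[s]opprK HB // HN.
have [a0 a0G] : exists a0, a0 \in Gd.
  apply/fset0Pn/negP => /eqP G0.
  move: hGd; rewrite G0 fsetD0 -/N -/n; lra.
have ba0 : (INR (bad A U a0) <= 4*e*n)%R by move: a0G; rewrite !inE => /andP[_ /rlebP].
have a0A : a0 \in A by move: a0G; rewrite !inE => /andP[].
have B1 : (INR #|` A `\` translate H a0| <= 4*e*n)%R.
  have sub : A `\` translate H a0 `<=` [fset x in A | ~~ rleb (INR (bad A U x)) (n/4)].
    apply/fsubsetP => a; rewrite !inE in_tr => /andP[haH haA]; rewrite haA /=.
    have hd : (n/2 <= INR (D A (a - a0)))%R.
      apply: Rnot_lt_le => hlt; have := gap _ hlt => hle.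
      by move: haH; rewrite memH; case: rlebP.
    have := D_bad a0 a hU; rewrite -D_tr => /INR_leq; rewrite INR_add => hh.
    apply/rlebP => hq; move: hd hh; move: (INR (D A (a - a0))) => d hd hh; lra.
  have := INR_leq (fsubset_leq_card sub); rewrite card_sep => hc.
  have c0 : (0 <= n/4)%R by lra.
  have := markov A (bad A U) c0; set c := INR (count _ _) => hm.
  have : (c * (n/4) <= e * n * n)%R by lra.
  move: hc; rewrite -/c => hc h2.
  suff : (c <= 4*e*n)%R by lra.
  apply: (Rmult_le_reg_r (n/4)); first by lra.
  nra.
set A1 := A `&` translate H a0.
have hA1 : (#|` A1| + #|` A `\` translate H a0|)%nat = N by rewrite cardfsID.
have hH1 : (#|` A1| + #|` translate H a0 `\` A|)%nat = #|` H|.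
  by rewrite /A1 fsetIC cardfsID card_tr.
have DC : (\sum_(t <- H) count (fun y : G => pl y t \in A1) A1 =
          \sum_(y <- A1) count (fun t : G => pl y t \in A1) H)%nat.
  under eq_bigr do rewrite count_sum.
  rewrite exchange_big /=; apply: eq_bigr => y _; by rewrite count_sum.
have UP : leq (\sum_(y <- A1) count (fun t : G => pl y t \in A1) H)%nat (#|` A1| * #|` A1|)%nat.
  apply: sum_upper => y hy; rewrite /pl.
  rewrite -card_sep -(card_tr _ y); apply: fsubset_leq_card; apply/fsubsetP => z.
  by rewrite in_tr !inE => /andP[_]; rewrite subrKC.
have LO : (INR #|` H| * (INR #|` A1| - 8*e*n) <=
           INR (\sum_(t <- H) count (fun y : G => pl y t \in A1) A1)%nat)%R.
  apply: sum_lower => t ht; rewrite /pl.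
  have sub : [fset y in A1 | ~~ (y + t \in A1)] `<=` A `\` translate A (- t).
    apply/fsubsetP => y; rewrite !inE => /andP[/andP[yA yH] hn].
    rewrite yA andbT in_tr opprK; apply: contra hn => yt; rewrite yt /=.
    rewrite in_tr in yH *.
    by rewrite in_tr addrAC HD.
  have := fsubset_leq_card sub; rewrite card_sep -/(D A (- t)) D_opp => /INR_leq hs.
  move: ht; rewrite memH => /rlebP ht.
  have hc : (count (fun y : G => pl y t \in A1) A1 + count (fun y : G => pl y t \notin A1) A1)%nat = #|` A1|.
    exact: count_predC.
  rewrite /pl in hc.
  move: hc hs; move: (count (fun y : G => y + t \in A1) A1) (count (fun y : G => y + t \notin A1) A1) => c1 c2.
  move/(f_equal INR); rewrite INR_add => hc hs.
  move: hs ht; move: (INR (D A t)) => d; lra.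
exists H, a0; split; first by split => // t s; apply: HB.
split; last by rewrite cardfs_gt0; apply/fset0Pn; exists 0.
have hsym : leq #|` symdiff A (translate H a0)| (#|` A `\` translate H a0| + #|` translate H a0 `\` A|).
  by rewrite /symdiff cardfsU leq_subr.
move: LO; rewrite DC => LO.
have := INR_leq UP; rewrite INR_mul => UP'.
move/(f_equal INR): hA1; rewrite INR_add -/n => hA1'.
move/(f_equal INR): hH1; rewrite INR_add => hH1'.
move/INR_leq: hsym; rewrite INR_add => hsym'.
have b10 := pos_INR #|` A `\` translate H a0|.
have b20 := pos_INR #|` translate H a0 `\` A|.
move: LO UP' hA1' hH1' hsym' B1 b10 b20.
move: (INR (\sum_(y <- A1) _)) (INR #|` A1|) (INR #|` H|) (INR #|` A `\` _|) (INR #|` _ `\` A|) (INR #|` symdiff _ _|) => S a h b1 b2 sy.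
move=> LO UP' hA1' hH1' hsym' B1' b10 b20.
have ha : (n/2 <= a)%R by lra.
have hb2 : (b2 * (a - 8*e*n) <= 8*e*n*a)%R by nra.
have hb2' : (b2 * (n/4) <= 8*e*n*n)%R.
  have : (b2 * (n/4) <= b2 * (a - 8*e*n))%R by apply: Rmult_le_compat_l; lra.
  have : (8*e*n*a <= 8*e*n*n)%R by apply: Rmult_le_compat_l; nra.
  lra.
have hb2'' : (b2 <= 32*e*n)%R.
  apply: (Rmult_le_reg_r (n/4)); first lra. nra.
have : (36 * e * n <= 72 * e * h)%R by nra.
nra.
Qed.
Local Close Scope ring_scope.
Local Open Scope R_scope.

Theorem mainTheorem1 :
  exists theta : R, 0 < theta /\
  forall (G : zmodType) (eps : R) (A : {fset G}),
    0 < eps -> eps < exp (-2) ->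
    distrib_approx_group eps A ->
    240 * eps * ln (/ eps * INR #|` A|) <= theta ->
    exists (H : {fset G}) (x : G),
      is_subgroup H /\
      INR #|` symdiff A (translate H x)| / INR #|` H|
         <= 240 * eps * ln (/ eps * INR #|` A|).
Proof.
exists 1; split; first lra.
move=> G eps A e0 e2 [hA [U [hU hP]]] hth.
have Apos : (0 < #|` A|)%nat by rewrite cardfs_gt0.
have n1 : 1 <= INR #|` A| by apply: (le_INR 1); apply/leP.
have hL : 2 <= ln (/ eps * INR #|` A|).
  rewrite -(ln_exp 2); apply: Rlt_le; apply: ln_increasing; first by apply: exp_pos.
  have h1 : exp 2 < / eps.
    rewrite -(Rinv_inv (exp 2)); apply: Rinv_lt_contravar.
      by apply: Rmult_lt_0_compat => //; apply: Rinv_0_lt_compat; apply: exp_pos.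
    by rewrite -exp_Ropp.
  have : / eps * 1 <= / eps * INR #|` A|.
    by apply: Rmult_le_compat_l => //; apply: Rlt_le; apply: Rinv_0_lt_compat.
  lra.
have e1 : eps <= 1/480 by nra.
have hsum : INR (\sum_(x <- A) bad A U x) <= eps * INR #|` A| * INR #|` A|.
  have := npairs_sum A U; move/(f_equal INR); rewrite INR_add INR_mul => hh.
  have nn : 0 < INR (muln #|` A| #|` A|) by rewrite INR_mul; nra.
  have : (1 - eps) * INR (muln #|` A| #|` A|) <= INR (npairs_in A U).
    have := Rmult_le_compat_r _ _ _ (Rlt_le _ _ nn) hP.
    by rewrite /Rdiv Rmult_assoc Rinv_l ?Rmult_1_r //; lra.
  rewrite INR_mul; move: hh; move: (INR (\sum_(x <- A) _)) (INR (npairs_in A U)) => S P hh ?; nra.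
have [H [x [hsub [hsym hpos]]]] := core Apos hU e0 e1 hsum.
exists H, x; split => //.
have hp : 0 < INR #|` H| by apply: (lt_INR 0); apply/ltP.
apply: (Rle_trans _ (480 * eps)); last by nra.
apply: (Rmult_le_reg_r (INR #|` H|)) => //.
rewrite /Rdiv Rmult_assoc Rinv_l ?Rmult_1_r; lra.
Qed.
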